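(* For every $k\in\mathbb Z$, the $q$-dimension of the charge-$k$ subspace of $\mathcal F^{-1}$ (which is the irreducible $\widehat{\mathfrak{gl}}_\infty$-module of level $-1$ attached to $k$) is $$\mathsf Q^{(k)}_{-1}(q):=\mathrm{tr}_{\mathcal F^{-1}_{(k)}}q^{L_0}=\frac{1}{(q)_\infty^2}\sum_{m\ge0}(-1)^mq^{\frac12m(m+1)+|k|(m+\frac12)}.$$
   Context: Let $\mathcal F^{-1}$ be the bosonic Fock space generated from a vacuum by commuting creation operators $\gamma^+_{-r},\gamma^-_{-r}$, $r\in\frac12+\mathbb Z_{\ge0}$, with basis the monomials $\gamma^+_{-r_1}\cdots\gamma^+_{-r_a}\gamma^-_{-s_1}\cdots\gamma^-_{-s_b}|0\rangle$ ($r_1\ge\cdots\ge r_a>0$, $s_1\ge\cdots\ge s_b>0$ in $\frac12+\mathbb Z$). $L_0$ acts on such a monomial by $\sum r_i+\sum s_j$; $\mathcal F^{-1}_{(k)}$ is the span of monomials with $a-b=k$. $(q)_\infty=\prod_{i\ge1}(1-q^i)$. *)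

(* Defs.v *)
(* Formal power series in t := q^(1/2) are handled
   coefficientwise; all q-exponents below are doubled (t-exponents). *)
From HB Require Import structures.
From mathcomp Require Import all_boot all_order all_algebra.
Set Implicit Arguments. Unset Strict Implicit. Unset Printing Implicit Defensive.
Import Order.TTheory GRing.Theory Num.Theory.

(* A basis monomial  g+_{-r_1}...g+_{-r_a} g-_{-s_1}...g-_{-s_b}|0>  of
   doubled weight 2 L_0 = n is encoded by its two multiplicity functions:
   fp i (resp. fm i) = number of occurrences of the mode r = i/2 (i odd)
   among the r's (resp. s's).  Since every doubled mode i is >= 1 and the
   total doubled weight is n, only modes i <= n and multiplicities <= n occur,
   so the ordinals 'I_n.+1 capture all such monomials. *)
Definition fock_monomial (k : int) (n : nat)
  (fp fm : {ffun 'I_n.+1 -> 'I_n.+1}) : bool :=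
  [&& [forall i : 'I_n.+1, ~~ odd i ==> (fp i == 0 :> nat)],
      [forall i : 'I_n.+1, ~~ odd i ==> (fm i == 0 :> nat)],
      (\sum_(i < n.+1) i * fp i + \sum_(i < n.+1) i * fm i == n)%N &
      (Posz (\sum_(i < n.+1) (fp i : nat)) - Posz (\sum_(i < n.+1) (fm i : nat)) == k)%R].

(* Coefficient of t^n = q^(n/2) in tr_{F^{-1}_(k)} q^{L_0}:
   the dimension of the L_0 = n/2 eigenspace of the charge-k subspace. *)
Definition trace_coef (k : int) (n : nat) : nat :=
  #|[set p : {ffun 'I_n.+1 -> 'I_n.+1} * {ffun 'I_n.+1 -> 'I_n.+1}
       | fock_monomial k p.1 p.2]|.

(* Truncation (exact up to t-degree n) of
   1/(q)_oo^2 = prod_{i>=1} (sum_{j>=0} q^(i j))^2, with q = t^2. *)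
Definition inv_poch2_trunc (n : nat) : {poly int} :=
  (\prod_(1 <= i < n.+1) (\sum_(j < n.+1) 'X^(2 * i * j)) ^+ 2)%R.

(* Truncation (exact up to t-degree n) of
   sum_{m>=0} (-1)^m q^(m(m+1)/2 + |k|(m+1/2)), with q = t^2. *)
Definition theta_trunc (k : int) (n : nat) : {poly int} :=
  (\sum_(m < n.+1) (-1) ^+ m *: 'X^(m * m.+1 + `|k|%N * (2 * m).+1))%R.

(* Main.v *)
Require Import Defs.
From HB Require Import structures.
From mathcomp Require Import all_boot all_order all_algebra.
From Stdlib Require Import Lia.
Set Implicit Arguments. Unset Strict Implicit. Unset Printing Implicit Defensive.
Import Order.TTheory GRing.Theory Num.Theory.
Local Open Scope ring_scope.
Ltac nlia := first [apply/ssrnat.ltP | apply/ssrnat.leP | idtac]; rewrite ?(addnE, mulnE, subnE) /=; nia.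

Section Trunc.
Variable N : nat.
Definition eqt (p q : {poly int}) := forall i, (i < N)%N -> p`_i = q`_i.

Lemma eqt_refl p : eqt p p. Proof. by []. Qed.
Lemma eqt_sym p q : eqt p q -> eqt q p. Proof. by move=> h i hi; rewrite h. Qed.
Lemma eqt_trans p q r : eqt p q -> eqt q r -> eqt p r.
Proof. by move=> h1 h2 i hi; rewrite h1 ?h2. Qed.
Lemma eqtD p1 p2 q1 q2 : eqt p1 p2 -> eqt q1 q2 -> eqt (p1 + q1) (p2 + q2).
Proof. by move=> h1 h2 i hi; rewrite !coefD h1 ?h2. Qed.
Lemma eqtN p1 p2 : eqt p1 p2 -> eqt (- p1) (- p2).
Proof. by move=> h1 i hi; rewrite !coefN h1. Qed.
Lemma eqtB p1 p2 q1 q2 : eqt p1 p2 -> eqt q1 q2 -> eqt (p1 - q1) (p2 - q2).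
Proof. by move=> h1 h2; apply: eqtD => //; apply: eqtN. Qed.
Lemma eqtM p1 p2 q1 q2 : eqt p1 p2 -> eqt q1 q2 -> eqt (p1 * q1) (p2 * q2).
Proof.
move=> h1 h2 i hi; rewrite !coefM; apply: eq_bigr => j _.
have hj : (j <= i)%N by rewrite -ltnS.
rewrite h1 ?h2 //; [exact: leq_ltn_trans (leq_subr _ _) hi | exact: leq_ltn_trans hj hi].
Qed.
Lemma eqt_sum (I : Type) (r : seq I) (P : pred I) (F G : I -> {poly int}) :
  (forall i, P i -> eqt (F i) (G i)) -> eqt (\sum_(i <- r | P i) F i) (\sum_(i <- r | P i) G i).
Proof.
move=> h; elim/big_rec2: _ => [|i x y Pi hxy]; first exact: eqt_refl.
by apply: eqtD => //; apply: h.
Qed.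
Lemma eqt_prod (I : Type) (r : seq I) (P : pred I) (F G : I -> {poly int}) :
  (forall i, P i -> eqt (F i) (G i)) -> eqt (\prod_(i <- r | P i) F i) (\prod_(i <- r | P i) G i).
Proof.
move=> h; elim/big_rec2: _ => [|i x y Pi hxy]; first exact: eqt_refl.
by apply: eqtM => //; apply: h.
Qed.
Lemma eqtX0 m p : (N <= m)%N -> eqt ('X^m * p) 0.
Proof.
move=> hm i hi; rewrite coefXnM coef0.
by rewrite (leq_trans hi hm).
Qed.
Lemma eqtMl p q r : eqt q r -> eqt (p * q) (p * r).
Proof. by move=> h; apply: eqtM => //; apply: eqt_refl. Qed.
Lemma eqtMr p q r : eqt q r -> eqt (q * p) (r * p).
Proof. by move=> h; apply: eqtM => //; apply: eqt_refl. Qed.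
End Trunc.


Section Uni.
Variable n : nat.
Local Notation N := n.+1.
Local Notation eqt := (eqt N).

Definition Geo (i : nat) : {poly int} := \sum_(j < n.+1) 'X^(2 * i * j).
Definition G (a : nat) : {poly int} := \prod_(1 <= i < a.+1) Geo i.
Definition Pr (c d : nat) : {poly int} := \prod_(c <= i < d) (1 - 'X^(2 * i)).

Lemma geom_sum (x : {poly int}) m : (1 - x) * \sum_(l < m) x ^+ l = 1 - x ^+ m.
Proof.
elim: m => [|m IH]; first by rewrite big_ord0 mulr0 expr0 subrr.
rewrite big_ord_recr /= mulrDr IH mulrBl mul1r exprS.
by rewrite [x * _]mulrC addrA subrK.
Qed.

Lemma eqt_X0 m : (N <= m)%N -> eqt 'X^m 0.
Proof. by move=> h; rewrite -[X in eqt X _]mulr1; apply: eqtX0. Qed.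

Lemma geo_inv j : (0 < j)%N -> eqt ((1 - 'X^(2 * j)) * Geo j) 1.
Proof.
move=> hj; rewrite /Geo.
rewrite (eq_bigr (fun l : 'I_n.+1 => ('X^(2 * j)) ^+ l)); last by move=> l _; rewrite exprM.
rewrite geom_sum -exprM.
rewrite -[X in eqt _ X]subr0; apply: eqtB; first exact: eqt_refl.
apply: eqt_X0.
by apply: leq_pmull; rewrite muln_gt0 hj.
Qed.

Lemma G_step a : eqt ((1 - 'X^(2 * a.+1)) * G a.+1) (G a).
Proof.
rewrite /G big_nat_recr //= mulrA [_ * G a]mulrC -mulrA.
rewrite -[X in eqt _ X]mulr1; apply: eqtMl; exact: geo_inv.
Qed.

Lemma PG a : eqt (Pr 1 a.+1 * G a) 1.
Proof.
elim: a => [|a IH]; first by rewrite /Pr /G !big_geq // mulr1.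
rewrite /Pr big_nat_recr //= -/(Pr 1 a.+1).
rewrite -mulrA; apply: eqt_trans (eqtMl _ (G_step a)) IH.
Qed.


Definition e (c : nat) : {poly int} := \sum_(0 <= b < n.+1) 'X^(2 * c * b) * G b.

Lemma eqt_sum0 (I : Type) (r : seq I) (P : pred I) (F : I -> {poly int}) :
  (forall i, P i -> eqt (F i) 0) -> eqt (\sum_(i <- r | P i) F i) 0.
Proof.
move=> h; elim/big_rec: _ => [|i x Pi hx]; first exact: eqt_refl.
by rewrite -[X in eqt _ X]addr0; apply: eqtD => //; apply: h.
Qed.

Lemma eqt0D p q : eqt p 0 -> eqt (q + p) q.
Proof. by move=> h; rewrite -[X in eqt _ X]addr0; apply: eqtD => //; apply: eqt_refl. Qed.

Lemma eqt_swap p q r : eqt (p - q) r -> eqt (p - r) q.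
Proof.
move=> h i hi; move: (h i hi); rewrite !coefB => <-.
by rewrite opprB addrC subrK.
Qed.

Lemma e_diff c : (0 < c)%N -> eqt (e c - e c.+1) ('X^(2 * c) * e c).
Proof.
move=> hc.
have -> : e c - e c.+1 = \sum_(0 <= b < n.+1) 'X^(2 * c * b) * ((1 - 'X^(2 * b)) * G b).
  rewrite /e -sumrB; apply: eq_bigr => b _.
  rewrite mulrBl mul1r mulrBr mulrA -exprD.
  by rewrite mulnSr mulnDl.
rewrite big_nat_recl // muln0 expr0 subrr mul0r mulr0 add0r.
rewrite /e mulr_sumr big_nat_recr //=.
set L := 'X^(2 * c) * ('X^(2 * c * n) * G n).
have hL : eqt L 0.
  rewrite /L mulrA -exprD; apply: eqtX0.
  by rewrite -mulnS leq_pmull // muln_gt0 hc.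
apply: eqt_trans (eqt_sym (eqt0D _ hL)).
apply: eqt_sum => b _.
rewrite mulrA -exprD -mulnS.
by apply: eqtMl; apply: G_step.
Qed.

Lemma e_step c : (0 < c)%N -> eqt ((1 - 'X^(2 * c)) * e c) (e c.+1).
Proof.
move=> hc; rewrite mulrBl mul1r; apply: eqt_swap.
exact: e_diff.
Qed.

Lemma e_big c : (N <= c)%N -> eqt (e c) 1.
Proof.
move=> hc; rewrite /e big_nat_recl // muln0 expr0 mul1r /G big_geq //.
apply: eqt0D; apply: eqt_sum0 => b _.
apply: eqtX0; rewrite mulnS; apply: leq_trans (leq_addr _ _).
by rewrite (leq_trans hc) // leq_pmull.
Qed.

Lemma E1 c : (0 < c)%N -> eqt (Pr c N * e c) 1.
Proof.
move=> hc.
have [m hm] : exists m, m = (N - c)%N by eexists.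
elim: m c hc hm => [|m IH] c hc hm.
  have hNc : (N <= c)%N by rewrite -subn_eq0 -hm.
  by rewrite /Pr big_geq // mul1r; apply: e_big.
have hcN : (c < N)%N by rewrite -subn_gt0 -hm.
rewrite /Pr big_ltn // -/(Pr c.+1 N) mulrC mulrA.
rewrite [_ * (1 - _)]mulrC.
apply: eqt_trans (eqtMr _ (e_step hc)) _.
rewrite mulrC; apply: IH => //.
by rewrite subnS -hm.
Qed.


Definition g (c : nat) : {poly int} :=
  \sum_(0 <= j < n.+1) (-1) ^+ j * 'X^(j * j.-1 + 2 * c * j) * G j.

Lemma g_diff c : (0 < c)%N -> eqt (g c - g c.+1) (- ('X^(2 * c) * g c.+1)).
Proof.
move=> hc.
have -> : g c - g c.+1 = \sum_(0 <= j < n.+1)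
     (-1) ^+ j * 'X^(j * j.-1 + 2 * c * j) * ((1 - 'X^(2 * j)) * G j).
  rewrite /g -sumrB; apply: eq_bigr => j _.
  have -> : (j * j.-1 + 2 * c.+1 * j = j * j.-1 + 2 * c * j + 2 * j)%N by nlia.
  by rewrite !exprD mulrBl mul1r mulrBr !mulrA.
rewrite big_nat_recl // !muln0 expr0 subrr mul0r mulr0 add0r.
rewrite /g mulr_sumr big_nat_recr //= opprD.
set L := 'X^(2 * c) * _.
have hL : eqt (- L) 0.
  rewrite -oppr0; apply: eqtN.
  rewrite /L -mulrA mulrCA (mulrA 'X^_) -exprD mulrCA; apply: eqtX0.
  move: hc => /ssrnat.ltP hc'; nlia.
apply: eqt_trans (eqt_sym (eqt0D _ hL)).
rewrite -sumrN; apply: eqt_sum => j _.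
have -> : (-1) ^+ j.+1 * 'X^(j.+1 * j.+1.-1 + 2 * c * j.+1) * ((1 - 'X^(2 * j.+1)) * G j.+1)
   = - ((-1) ^+ j * 'X^(j * j.-1 + 2 * c.+1 * j) * 'X^(2 * c)) * ((1 - 'X^(2 * j.+1)) * G j.+1).
  rewrite exprS mulN1r !mulNr; congr (- _).
  rewrite -!mulrA; congr (_ * _); rewrite mulrA -exprD; congr (_ * _); congr ('X^_).
  case: j => [|j] /=; nlia.
rewrite mulNr; apply: eqtN.
rewrite [X in eqt _ X]mulrA [X in eqt _ (X * _)]mulrC.
apply: eqtMl; apply: G_step.
Qed.

Lemma g_step c : (0 < c)%N -> eqt (g c) ((1 - 'X^(2 * c)) * g c.+1).
Proof.
move=> hc i hi; move: (g_diff hc hi); rewrite coefB coefN mulrBl mul1r coefB.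
by move/eqP; rewrite subr_eq => /eqP ->; rewrite addrC.
Qed.

Lemma g_big c : (N <= c)%N -> eqt (g c) 1.
Proof.
move=> hc; rewrite /g big_nat_recl // !muln0 expr0 !mul1r /G big_geq //.
apply: eqt0D; apply: eqt_sum0 => b _.
rewrite mulrC mulrA mulrC !mulrA -mulrA; apply: eqtX0.
apply: leq_trans (leq_addl _ _); rewrite mulnS; apply: leq_trans (leq_addr _ _).
by rewrite (leq_trans hc) // leq_pmull.
Qed.

Lemma E2 c : (0 < c)%N -> eqt (Pr c N) (g c).
Proof.
move=> hc.
have [m hm] : exists m, m = (N - c)%N by eexists.
elim: m c hc hm => [|m IH] c hc hm.
  have hNc : (N <= c)%N by rewrite -subn_eq0 -hm.
  by rewrite /Pr big_geq //; apply: eqt_sym; apply: g_big.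
have hcN : (c < N)%N by rewrite -subn_gt0 -hm.
rewrite /Pr big_ltn // -/(Pr c.+1 N).
apply: eqt_trans (eqt_sym (g_step hc)).
apply: eqtMl; apply: IH => //.
by rewrite subnS -hm.
Qed.


Lemma rearr (s A B C : {poly int}) e1 e2 e3 e4 : (e1 + e2 = e3 + e4)%N ->
  'X^e1 * (s * 'X^e2 * A) * (B * C) = (s * 'X^e3 * A * B) * ('X^e4 * C).
Proof.
move=> he.
have hx : 'X^e1 * 'X^e2 = 'X^e3 * 'X^e4 :> {poly int} by rewrite -!exprD he.
rewrite -!mulrA mulrCA; congr (_ * _).
rewrite [LHS]mulrA -exprD he exprD -mulrA; congr (_ * _).
rewrite mulrCA; congr (_ * _).
by rewrite mulrCA.
Qed.

Lemma Pr_split a b c : (a <= b)%N -> (b <= c)%N -> Pr a c = Pr a b * Pr b c.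
Proof. by move=> h1 h2; rewrite /Pr (big_cat_nat h1 h2). Qed.

Lemma Pr_big a b : (N <= a)%N -> eqt (Pr a b) 1.
Proof.
move=> ha; rewrite /Pr big_seq_cond.
elim/big_rec: _ => [|i x /andP [+ _] hx]; first exact: eqt_refl.
rewrite mem_index_iota => /andP [hi _].
rewrite -[X in eqt _ X]mul1r; apply: eqtM => //.
rewrite -[X in eqt _ X]subr0; apply: eqtB; first exact: eqt_refl.
apply: eqt_X0; apply: leq_trans (leq_trans ha hi) _.
by rewrite leq_pmull.
Qed.

Lemma PG_tail a : eqt (Pr 1 N * G a) (Pr a.+1 N).
Proof.
case: (ltnP a N) => ha.
  rewrite (@Pr_split 1 a.+1 N) // mulrC mulrA [G a * _]mulrC.
  rewrite -[X in eqt _ X]mul1r; apply: eqtMr; exact: PG.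
have -> : Pr a.+1 N = 1 by rewrite /Pr big_geq // leqW.
apply: eqt_trans (PG a).
rewrite (@Pr_split 1 N a.+1) //; last exact: leqW.
rewrite -mulrA [Pr N a.+1 * G a]mulrC mulrA.
rewrite -[X in eqt X _]mulr1; apply: eqtMl.
by apply: eqt_sym; apply: Pr_big.
Qed.

Definition cK (K : nat) : {poly int} :=
  \sum_(0 <= b < n.+1) 'X^(2 * b + K) * G (b + K) * G b.
Definition th (K : nat) : {poly int} :=
  \sum_(0 <= m < n.+1) (-1) ^+ m * 'X^(m * m.+1 + K * (2 * m).+1).

Lemma thetaK K : eqt (Pr 1 N ^+ 2 * cK K) (th K).
Proof.
set P := Pr 1 N.
have -> : P ^+ 2 * cK K = \sum_(0 <= b < n.+1) 'X^(2 * b + K) * (P * G (b + K)) * (P * G b).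
  rewrite /cK mulr_sumr; apply: eq_bigr => b _.
  rewrite expr2 -!mulrA [RHS]mulrCA; congr (_ * _).
  rewrite [LHS]mulrCA; congr (_ * _).
  by rewrite mulrCA.
apply: (@eqt_trans _ _ (\sum_(0 <= b < n.+1) 'X^(2 * b + K) * g (b + K).+1 * (P * G b))).
  apply: eqt_sum => b _; apply: eqtMr; apply: eqtMl.
  apply: eqt_trans (PG_tail _) _; exact: E2.
have -> : \sum_(0 <= b < n.+1) 'X^(2 * b + K) * g (b + K).+1 * (P * G b) =
  \sum_(0 <= j < n.+1) ((-1) ^+ j * 'X^(j * j.-1 + 2 * K.+1 * j + K) * G j * P) * e j.+1.
  rewrite (eq_bigr (fun b => \sum_(0 <= j < n.+1) 'X^(2 * b + K) *
      ((-1) ^+ j * 'X^(j * j.-1 + 2 * (b + K).+1 * j) * G j) * (P * G b))); last first.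
    by move=> b _; rewrite /g mulr_sumr mulr_suml.
  rewrite exchange_big_nat; apply: eq_bigr => j _.
  rewrite /e mulr_sumr; apply: eq_bigr => b _.
  apply: rearr; nlia.
rewrite [X in eqt X _]big_seq [X in eqt _ X]big_seq; apply: eqt_sum => j.
rewrite mem_index_iota => /andP [_ hj].
rewrite -mulrA -[X in eqt _ X]mulr1.
have -> : (j * j.-1 + 2 * K.+1 * j + K = j * j.+1 + K * (2 * j).+1)%N.
  by case: j hj => [|j] _ /=; nlia.
rewrite -[X in eqt X _]mulrA; apply: eqtMl; rewrite /P (@Pr_split 1 j.+1 N) //.
rewrite mulrCA mulrACA -[X in eqt _ X](mulr1 1).
apply: eqtM; first exact: PG.
exact: E1.
Qed.

End Uni.


Section Bi.
Variable n : nat.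
Local Notation N := n.+1.
Local Notation eqt := (eqt N).

Definition cc (i j : nat) : {poly int} := if odd i || (j == 0)%N then 'X^(i * j) else 0.
Definition S (i : nat) : {poly {poly int}} := \poly_(j < N) cc i j.
Definition H : {poly {poly int}} := \prod_(i < N) S i.
Definition h (a : nat) : {poly int} := H`_a.

Definition beq (P Q : {poly {poly int}}) := forall a, eqt (P`_a) (Q`_a).

Lemma beq_refl P : beq P P. Proof. by move=> a; apply: eqt_refl. Qed.
Lemma beq_sym P Q : beq P Q -> beq Q P. Proof. by move=> h a; apply: eqt_sym. Qed.
Lemma beq_trans P Q R : beq P Q -> beq Q R -> beq P R.
Proof. by move=> h1 h2 a; apply: eqt_trans (h1 a) (h2 a). Qed.
Lemma beqM P1 P2 Q1 Q2 : beq P1 P2 -> beq Q1 Q2 -> beq (P1 * Q1) (P2 * Q2).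
Proof.
move=> h1 h2 a; rewrite !coefM; apply: eqt_sum => j _.
by apply: eqtM.
Qed.

Lemma S_big i : (N <= i)%N -> beq (S i) 1.
Proof.
move=> hi a; rewrite coef_poly coefC.
case: a => [|a] /=; first by rewrite /cc orbT muln0 expr0; apply: eqt_refl.
case: ifP => ha; last exact: eqt_refl.
rewrite /cc /=; case: ifP => _; last exact: eqt_refl.
apply: eqt_X0; apply: leq_trans hi _; exact: leq_pmulr.
Qed.

Lemma S0 : S 0 = 1.
Proof.
apply/polyP => a; rewrite coef_poly coefC /cc /=.
by case: a => [|a] //=; case: ifP.
Qed.

Definition tz : {poly {poly int}} := ('X : {poly int})%:P * 'X.

Lemma S1 : beq (S 1 * (1 - tz)) 1.
Proof.
move=> a; rewrite mulrBr mulr1 coefB /tz mulrA coefMX coefMC !coef_poly coefC /cc /=.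
case: a => [|a] /=; first by rewrite expr0 subr0; apply: eqt_refl.
rewrite mul1n.
case: (ltnP a.+1 N) => ha.
  by rewrite (ltnW ha) mul1n -exprSr subrr; apply: eqt_refl.
case: ifP => ha'.
  rewrite sub0r mul1n -exprSr -oppr0; apply: eqtN; apply: eqt_X0 => //.
by rewrite sub0r mul0r oppr0; apply: eqt_refl.
Qed.

Definition sc (P : {poly {poly int}}) : {poly {poly int}} :=
  \poly_(a < size P) ('X^(2 * a) * P`_a).

Lemma coef_sc P a : (sc P)`_a = 'X^(2 * a) * P`_a.
Proof.
rewrite coef_poly; case: ltnP => // ha.
by rewrite nth_default // mulr0.
Qed.

Lemma scM P Q : sc (P * Q) = sc P * sc Q.
Proof.
apply/polyP => a; rewrite coef_sc !coefM mulr_sumr; apply: eq_bigr => j _.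
rewrite (coef_sc P) (coef_sc Q) mulrACA -exprD; congr (_ * _); congr (_ ^+ _).
have hj : (j <= a)%N by rewrite -ltnS.
by rewrite -mulnDr subnKC.
Qed.

Lemma sc1 : sc 1 = 1.
Proof.
apply/polyP => a; rewrite coef_sc coefC.
by case: a => [|a] /=; rewrite ?mul0n ?expr0 ?mul1r // mulr0.
Qed.

Lemma scS i : sc (S i) = S i.+2.
Proof.
apply/polyP => a; rewrite coef_sc !coef_poly.
case: ifP => _; last by rewrite mulr0.
rewrite /cc /= ?negbK; case: ifP => _; last by rewrite mulr0.
by rewrite -exprD; congr (_ ^+ _); nlia.
Qed.

Lemma scH : sc H = \prod_(i < N) S i.+2.
Proof.
rewrite /H (big_morph sc scM sc1); apply: eq_bigr => i _; exact: scS.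
Qed.

Lemma H_rel : beq (H * (1 - tz)) (sc H).
Proof.
have e1 : beq H (\prod_(i < N.+2) S i).
  rewrite big_ord_recr big_ord_recr /= -/H -[X in beq X _]mulr1 -mulrA.
  apply: beqM; first exact: beq_refl.
  rewrite -[X in beq X _](mulr1 1); apply: beqM; apply: beq_sym; apply: S_big => //.
have e2 : \prod_(i < N.+2) S i = S 0 * (S 1 * \prod_(i < N) S i.+2).
  by rewrite !big_ord_recl.
rewrite scH; apply: beq_trans (beqM e1 (beq_refl (1 - tz))) _.
rewrite e2 S0 mul1r mulrC mulrA -[X in beq _ X]mul1r.
apply: beqM; last exact: beq_refl.
by rewrite mulrC; exact: S1.
Qed.

Lemma h_rel a : eqt (h a - (if a is a'.+1 then h a' * 'X else 0)) ('X^(2 * a) * h a).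
Proof.
have := H_rel a; rewrite coef_sc mulrBr mulr1 coefB /tz mulrA coefMX coefMC.
by case: a.
Qed.

Lemma h0 : h 0 = 1.
Proof.
rewrite /h /H coef0_prod; apply: big1 => i _.
by rewrite coef_poly /= /cc orbT muln0 expr0.
Qed.

Lemma Ph a : eqt (Pr 1 a.+1 * h a) 'X^a.
Proof.
elim: a => [|a IH]; first by rewrite /Pr big_geq // h0 mulr1; apply: eqt_refl.
rewrite /Pr big_nat_recr //= -/(Pr 1 a.+1) -mulrA.
have h1 : eqt ((1 - 'X^(2 * a.+1)) * h a.+1) (h a * 'X).
  rewrite mulrBl mul1r; apply: eqt_swap; exact: (h_rel a.+1).
apply: eqt_trans (eqtMl _ h1) _.
by rewrite mulrA exprSr; apply: eqtMr.
Qed.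

End Bi.


Section Comb.
Variable n : nat.
Local Notation N := n.+1.
Local Notation FF := {ffun 'I_n.+1 -> 'I_n.+1}.

Definition ok (f : FF) : bool := [forall i : 'I_n.+1, ~~ odd i ==> (f i == 0 :> nat)].
Definition sz (f : FF) : nat := \sum_(i < n.+1) (f i : nat).
Definition w (f : FF) : nat := \sum_(i < n.+1) i * f i.

Lemma prod_cc (f : FF) : \prod_(i < N) cc i (f i) = if ok f then 'X^(w f) else 0.
Proof.
case: ifP => hok.
  rewrite /w -prodrXr; apply: eq_bigr => i _.
  rewrite /cc; move/forallP: hok => /(_ i).
  by case: (odd i) => //= /eqP ->.
move/negbT: hok; rewrite negb_forall => /existsP [i].
rewrite negb_imply => /andP [hi hf].
rewrite (bigD1 i) //= /cc (negbTE hi) (negbTE hf) /=.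
by rewrite mul0r.
Qed.

Lemma prod_scale (c : 'I_N -> {poly int}) (m : 'I_N -> nat) :
  \prod_(i < N) (c i *: ('X^(m i) : {poly {poly int}})) =
  (\prod_(i < N) c i) *: 'X^(\sum_(i < N) m i).
Proof.
rewrite -mul_polyC rmorph_prod -prodrXr -big_split /=.
by apply: eq_bigr => i _; rewrite mul_polyC.
Qed.

Lemma H_expand : H n = \sum_(f : FF) (if ok f then 'X^(w f) else 0) *: 'X^(sz f).
Proof.
rewrite /H (eq_bigr (fun i : 'I_N => \sum_(j : 'I_N) cc i j *: 'X^j)); last first.
  by move=> i _; rewrite /S poly_def.
rewrite bigA_distr_bigA /=; apply: eq_bigr => f _.
by rewrite prod_scale prod_cc.
Qed.

Lemma h_expand a : h n a = \sum_(f : FF | sz f == a) (if ok f then 'X^(w f) else 0).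
Proof.
rewrite /h H_expand coef_sum [RHS]big_mkcond /=; apply: eq_bigr => f _.
rewrite coefZ coefXn eq_sym; case: (sz f == a); by rewrite ?mulr1 ?mulr0.
Qed.

Lemma coef_hh a b : (h n a * h n b)`_n =
  \sum_(f : FF | sz f == a) \sum_(g : FF | sz g == b)
     (if [&& ok f, ok g & w f + w g == n]%N then 1 else 0).
Proof.
rewrite !h_expand mulr_suml coef_sum; apply: eq_bigr => f _.
rewrite mulr_sumr coef_sum; apply: eq_bigr => g _.
case: (ok f); case: (ok g); rewrite ?mulr0 ?mul0r ?coef0 //=.
by rewrite -exprD coefXn eq_sym; case: (_ == _).
Qed.

Local Notation M := (n.+1 * n.+1)%N.

Lemma sz_lt (f : FF) : (sz f < M)%N.
Proof.
have : (sz f <= \sum_(i < N) n)%N by apply: leq_sum => i _; rewrite -ltnS.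
rewrite sum_nat_const card_ord => /leq_ltn_trans; apply.
by rewrite ltn_pmul2l.
Qed.

Definition szo (f : FF) : 'I_M := Ordinal (sz_lt f).

Lemma fockE k (f g : FF) : fock_monomial k f g =
  [&& ok f, ok g, (w f + w g == n)%N & (Posz (sz f) - Posz (sz g) == k)].
Proof. by []. Qed.

Lemma count_eq k : Posz (trace_coef k n) =
  \sum_(a < M) \sum_(b < M) (if Posz a - Posz b == k then (h n a * h n b)`_n else 0).
Proof.
rewrite /trace_coef -sum1_card (big_morph Posz PoszD (erefl _)) big_mkcond /=.
rewrite (_ : \sum_(p : FF * FF) _ = \sum_(f : FF) \sum_(g : FF)
    (if (f, g) \in [set p : FF * FF | fock_monomial k p.1 p.2] then Posz 1 else 0)); last first.
  by rewrite pair_bigA; apply: eq_bigr => -[f g].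
rewrite (partition_big szo xpredT) //=.
apply: eq_bigr => a _.
rewrite (eq_bigr (fun f => \sum_(b < M) \sum_(g | szo g == b)
    (if (f, g) \in [set p : FF * FF | fock_monomial k p.1 p.2] then Posz 1 else 0))); last first.
  by move=> f _; rewrite (partition_big szo xpredT).
rewrite exchange_big /=; apply: eq_bigr => b _.
case: ifP => hk.
  rewrite coef_hh.
  rewrite (eq_bigl (fun f => sz f == a)); last by move=> f.
  apply: eq_bigr => f /eqP hf.
  rewrite (eq_bigl (fun g => sz g == b)); last by move=> g.
  apply: eq_bigr => g /eqP hg.
  rewrite inE /= fockE hf hg hk andbT.
  by case: ([&& _, _ & _]).
rewrite big1 // => f /eqP/(congr1 val) /= hf; rewrite big1 // => g /eqP/(congr1 val) /= hg.
by rewrite inE /= fockE hf hg hk !andbF.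
Qed.

End Comb.


Section Fin.
Variable n : nat.
Local Notation N := n.+1.
Local Notation M := (n.+1 * n.+1)%N.
Local Notation E a b := ((h n a * h n b)`_n).

Lemma h_approx a : eqt N (h n a) ('X^a * G n a).
Proof.
apply: (@eqt_trans _ _ ((Pr 1 a.+1 * G n a) * h n a)).
  rewrite -[X in eqt _ X _]mul1r; apply: eqtMr; apply: eqt_sym; exact: PG.
rewrite mulrAC; apply: eqtMr.
exact: Ph.
Qed.

Lemma E_val a b : E a b = ('X^(a + b) * (G n a * G n b))`_n.
Proof.
have := eqtM (h_approx a) (h_approx b) (ltnSn n) => ->.
by rewrite mulrACA -exprD.
Qed.

Lemma E_zero a b : (N <= a + b)%N -> E a b = 0.
Proof. by move=> hab; rewrite E_val (eqtX0 _ hab) ?coef0. Qed.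

Lemma E_sym a b : E a b = E b a.
Proof. by rewrite mulrC. Qed.

Lemma sum_pick (F : nat -> int) c :
  \sum_(a < M) (if a == c :> nat then F a else 0) = if (c < M)%N then F c else 0.
Proof. by rewrite -big_mkcond big_ord1_eq. Qed.

Lemma sum_shrink (F : nat -> int) : (forall b, (N <= b)%N -> F b = 0) ->
  \sum_(b < M) F b = \sum_(b < N) F b.
Proof.
move=> hF; rewrite -!(big_mkord xpredT) (@big_cat_nat _ _ _ N) //=; last first.
  by rewrite leq_pmull.
rewrite [X in _ + X]big1_seq ?addr0 // => b /andP [_]; rewrite mem_index_iota => /andP [hb _].
exact: hF.
Qed.

Lemma sumK K : \sum_(b < M) (if (b + K < M)%N then E (b + K) b else 0) = \sum_(b < N) E (b + K) b.
Proof.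
rewrite (eq_bigr (fun b : 'I_M => E (b + K) b)); last first.
  move=> b _; case: ifP => // hb; rewrite E_zero //.
  move/negbT: hb; rewrite -leqNgt => hb.
  apply: leq_trans (leq_trans _ hb) (leq_addr _ _).
  by rewrite leq_pmull.
apply: (@sum_shrink (fun b => E (b + K) b)) => b hb; apply: E_zero.
by apply: leq_trans hb _; rewrite addnC leq_addr.
Qed.

End Fin.


Lemma main_sum (k : int) (n : nat) :
  \sum_(a < n.+1 * n.+1) \sum_(b < n.+1 * n.+1)
     (if Posz a - Posz b == k then (h n a * h n b)`_n else 0) =
  \sum_(b < n.+1) (h n (b + `|k|%N) * h n b)`_n.
Proof.
case: k => K.
  rewrite exchange_big /= -sumK; apply: eq_bigr => b _.
  rewrite -(sum_pick n (fun a => (h n a * h n b)`_n)); apply: eq_bigr => a _.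
  by rewrite subr_eq -PoszD eqz_nat addnC.
rewrite -sumK; apply: eq_bigr => a _.
change (`|Negz K|%N) with K.+1.
rewrite -(sum_pick n (fun _ => (h n (a + K.+1) * h n a)`_n) (a + K.+1)).
apply: eq_bigr => b _; rewrite NegzE.
have -> : (Posz a - Posz b == - Posz K.+1) = (nat_of_ord b == (nat_of_ord a + K.+1)%N).
  by rewrite subr_eq addrC -subr_eq opprK -PoszD eqz_nat eq_sym.
by case: eqP => // ->; rewrite E_sym.
Qed.

Lemma cK_coef n K : (cK n K)`_n = \sum_(b < n.+1) (h n (b + K) * h n b)`_n.
Proof.
rewrite /cK coef_sum big_mkord; apply: eq_bigr => b _.
rewrite E_val mulrA.
by have -> : (b + K + b = 2 * b + K)%N by rewrite addnAC addnn -mul2n.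
Qed.

Theorem proposition2p10 (k : int) (n : nat) :
  (Posz (trace_coef k n) = (inv_poch2_trunc n * theta_trunc k n)`_n)%R.
Proof.
rewrite count_eq main_sum -cK_coef.
have hinv : inv_poch2_trunc n = G n n ^+ 2.
  by rewrite /inv_poch2_trunc /G prodrXl.
have hth : theta_trunc k n = th n `|k|%N.
  rewrite /theta_trunc /th big_mkord; apply: eq_bigr => m _.
  by rewrite -mul_polyC rmorphXn rmorphN1.
rewrite hinv hth.
have h1 : eqt n.+1 (G n n ^+ 2 * Pr 1 n.+1 ^+ 2) 1.
  rewrite -exprMn mulrC expr2 -[X in eqt _ _ X](mulr1 1).
  by apply: eqtM; apply: PG.
have h2 : eqt n.+1 (cK n `|k|%N) (G n n ^+ 2 * th n `|k|%N).
  apply: (@eqt_trans _ _ ((G n n ^+ 2 * Pr 1 n.+1 ^+ 2) * cK n `|k|%N)).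
    rewrite -[X in eqt _ X _]mul1r; apply: eqtMr; exact: eqt_sym h1.
  rewrite -mulrA; apply: eqtMl; exact: thetaK.
exact: h2.
Qed.
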